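(* Let $X$ be a Banach lattice with order continuous norm, and let $S$ be a convex $C_0$-semigroup on $X$ with generator $A\colon D(A)\subset X\to X$. Let $y\colon[0,\infty)\to X$ be a continuous function such that $y(t)\in D(A)$ for all $t\ge 0$ and $\lim_{h\downarrow 0}\frac{y(t+h)-y(t)}{h}=Ay(t)$ for all $t\ge 0$. Then $y(t)=S(t)x$ for all $t\ge 0$, where $x:=y(0)$.
   Context: A Banach lattice $X$ has order continuous norm if $\|x_\alpha\|\to 0$ for every net $x_\alpha\downarrow 0$. An operator $T\colon X\to X$ is convex if $T(\lambda x+(1-\lambda)y)\le \lambda Tx+(1-\lambda)Ty$ for all $x,y$, $\lambda\in[0,1]$, and bounded if $\sup_{\|x\|\le r}\|Tx\|<\infty$ for all $r>0$. A convex $C_0$-semigroup is a family $(S(t))_{t\ge0}$ of bounded convex operators $X\to X$ with $S(0)=\mathrm{id}$, $S(t+s)=S(t)S(s)$ for all $s,t\ge0$, and $S(t)x\to x$ as $t\downarrow 0$ for all $x$. Its generator is $Ax:=\lim_{h\downarrow 0}\frac{S(h)x-x}{h}$ with domain $D(A)$ the set of $x$ for which this norm limit exists. *)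

(* Defs.v *)
From HB Require Import structures.
From mathcomp Require Import all_boot all_order all_algebra.
From mathcomp Require Import all_classical all_reals all_analysis.
Set Implicit Arguments. Unset Strict Implicit. Unset Printing Implicit Defensive.
Import Order.TTheory GRing.Theory Num.Theory.
Import numFieldNormedType.Exports.
Local Open Scope classical_set_scope.
Local Open Scope ring_scope.

Section BanachLattice.
Context {R : realType} {V : completeNormedModType R}.

Definition is_sup2 (le : V -> V -> Prop) (s x y : V) : Prop :=
  le x s /\ le y s /\ (forall u, le x u -> le y u -> le s u).

Definition vector_lattice (le : V -> V -> Prop) : Prop :=
  (forall x, le x x) /\
  (forall x y, le x y -> le y x -> x = y) /\
  (forall x y z, le x y -> le y z -> le x z) /\
  (forall x y z, le x y -> le (x + z) (y + z)) /\
  (forall (a : R) x, 0 <= a -> le 0 x -> le 0 (a *: x)) /\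
  (forall x y, exists s, is_sup2 le s x y).

Definition banach_lattice (le : V -> V -> Prop) : Prop :=
  vector_lattice le /\
  (forall x y ax ay, is_sup2 le ax x (- x) -> is_sup2 le ay y (- y) ->
     le ax ay -> `|x| <= `|y|).

(* Order continuous norm: ||x_a|| -> 0 for every net x_a decreasing to 0
   (i.e. decreasing with infimum 0), indexed by a nonempty directed set. *)
Definition order_continuous_norm (le : V -> V -> Prop) : Prop :=
  forall (I : Type) (leI : I -> I -> Prop) (x : I -> V),
    (exists i : I, True) ->
    (forall i, leI i i) ->
    (forall i j k, leI i j -> leI j k -> leI i k) ->
    (forall i j, exists k, leI i k /\ leI j k) ->
    (forall i j, leI i j -> le (x j) (x i)) ->
    (forall i, le 0 (x i)) ->
    (forall u, (forall i, le u (x i)) -> le u 0) ->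
    forall eps : R, 0 < eps -> exists i0, forall i, leI i0 i -> `|x i| < eps.

Definition convex_op (le : V -> V -> Prop) (T : V -> V) : Prop :=
  forall (x y : V) (l : R), 0 <= l <= 1 ->
    le (T (l *: x + (1 - l) *: y)) (l *: T x + (1 - l) *: T y).

Definition bounded_op (T : V -> V) : Prop :=
  forall r : R, 0 < r -> exists M : R, forall x : V, `|x| <= r -> `|T x| <= M.

(* Convex C0-semigroup; S t is only relevant for t >= 0. *)
Definition convex_C0_semigroup (le : V -> V -> Prop) (S : R -> V -> V) : Prop :=
  [/\ (forall t, 0 <= t -> convex_op le (S t) /\ bounded_op (S t)),
      (forall x, S 0 x = x),
      (forall s t x, 0 <= s -> 0 <= t -> S (t + s) x = S t (S s x)) &
      (forall x, (fun t => S t x) @ 0^'+ --> x)].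

(* a = A x where A is the generator of S, i.e. x \in D(A) with
   (S h x - x)/h -> a as h decreases to 0. *)
Definition generator_at (S : R -> V -> V) (x a : V) : Prop :=
  (fun h : R => h^-1 *: (S h x - x)) @ 0^'+ --> a.

End BanachLattice.

(* Main.v *)
Require Import Defs.
From HB Require Import structures.
From mathcomp Require Import all_boot all_order all_algebra.
From mathcomp Require Import all_classical all_reals all_analysis.
From mathcomp Require Import ring lra.
Import Order.TTheory GRing.Theory Num.Theory.
Import numFieldNormedType.Exports.
Local Open Scope classical_set_scope.
Local Open Scope ring_scope.

Section Lat.
Context {R : realType} {V : completeNormedModType R} {le : V -> V -> Prop}.

Lemma le_refl_ (h : vector_lattice le) x : le x x.
Proof. by case: h. Qed.
Lemma le_trans_ (h : vector_lattice le) {x y z} : le x y -> le y z -> le x z.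
Proof. by case: h => _ [_ [H _]]; apply: H. Qed.
Lemma le_addr_ (h : vector_lattice le) z {x y} : le x y -> le (x + z) (y + z).
Proof. by case: h => _ [_ [_ [H _]]]; apply: H. Qed.
Lemma le_cone_ (h : vector_lattice le) (a : R) {x} : 0 <= a -> le 0 x -> le 0 (a *: x).
Proof. by case: h => _ [_ [_ [_ [H _]]]]; apply: H. Qed.
Lemma le_sup_ (h : vector_lattice le) x y : exists s, is_sup2 le s x y.
Proof. by case: h => _ [_ [_ [_ [_ H]]]]; apply: H. Qed.

Lemma le_subP (h : vector_lattice le) x y : le x y <-> le 0 (y - x).
Proof.
split=> H.
  by have := le_addr_ h (- x) H; rewrite subrr.
by have := le_addr_ h x H; rewrite add0r subrK.
Qed.

Lemma le_scale_ (h : vector_lattice le) (a : R) {x y} : 0 <= a -> le x y -> le (a *: x) (a *: y).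
Proof.
move=> a0 /(le_subP h) H; apply/(le_subP h); rewrite -scalerBr; exact: (le_cone_ h).
Qed.

Lemma le_opp_ (h : vector_lattice le) {x y} : le x y -> le (- y) (- x).
Proof.
move=> /(le_subP h) H; apply/(le_subP h); by rewrite opprK addrC.
Qed.

Lemma le_add_ (h : vector_lattice le) {x y x' y'} : le x y -> le x' y' -> le (x + x') (y + y').
Proof.
move=> H1 H2; apply: (le_trans_ h (le_addr_ h x' H1)).
by rewrite ![y + _]addrC; apply: (le_addr_ h).
Qed.

Lemma sup_nonneg (h : vector_lattice le) s x : is_sup2 le s x (- x) -> le 0 s.
Proof.
move=> [H1 [H2 _]].
have H3 : le 0 ((1 / 2 : R) *: (s - x + (s + x))).
  apply: (le_cone_ h) => //; rewrite -[0](addr0 0); apply: (le_add_ h) => //.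
  - exact: (proj1 (le_subP h _ _) H1).
  - by have := proj1 (le_subP h _ _) H2; rewrite opprK.
suff -> : s = (1 / 2 : R) *: (s - x + (s + x)) by [].
rewrite addrACA addNr addr0 -mulr2n -(scaler_nat 2 s) scalerA mul1r mulVf ?scale1r // pnatr_eq0.
Qed.

Lemma nonneg_sup (h : vector_lattice le) c : le 0 c -> is_sup2 le c c (- c).
Proof.
move=> c0; split; first exact: le_refl_.
split; last by [].
apply: (le_trans_ h _ c0).
by have := le_opp_ h c0; rewrite oppr0.
Qed.

Lemma norm_sup (h : banach_lattice le) s x : is_sup2 le s x (- x) -> `|s| <= `|x|.
Proof.
move=> Hs; have s0 := sup_nonneg h.1 _ _ Hs.
case: h => hv hn; apply: (hn s x s s (nonneg_sup hv s s0) Hs (le_refl_ hv s)).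
Qed.

Lemma sandwich_norm (h : banach_lattice le) a u b : le a u -> le u b -> `|u| <= `|a| + `|b|.
Proof.
move=> au ub; have hv := h.1.
have [sa Ha] := le_sup_ hv a (- a).
have [sb Hb] := le_sup_ hv b (- b).
have [su Hu] := le_sup_ hv u (- u).
have sa0 := sup_nonneg hv _ _ Ha; have sb0 := sup_nonneg hv _ _ Hb.
have c0 : le 0 (sa + sb) by rewrite -[0](addr0 0); apply: (le_add_ hv).
have Hsu : le su (sa + sb).
  case: Hu => _ [_ Hu]; apply: Hu.
  - apply: (le_trans_ hv ub); apply: (le_trans_ hv Hb.1).
    by rewrite -{1}[sb]add0r; apply: (le_addr_ hv).
  - apply: (le_trans_ hv (le_opp_ hv au)); apply: (le_trans_ hv Ha.2.1).
    by rewrite -{1}[sa]addr0; rewrite addrC [sa + _]addrC; apply: (le_addr_ hv).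
have := h.2 u (sa + sb) su (sa + sb) Hu (nonneg_sup hv _ c0) Hsu.
move/le_trans; apply; apply: (le_trans (ler_normD _ _)).
by apply: lerD; apply: norm_sup.
Qed.

End Lat.


Section Conv.
Context {R : realType} {V : completeNormedModType R} (le : V -> V -> Prop).

Lemma comb2 (a b c e : R) (x d : V) :
  a *: (x + b *: d) + c *: (x + e *: d) = (a + c) *: x + (a * b + c * e) *: d.
Proof. by rewrite !scalerDr !scalerA !scalerDl addrACA. Qed.

Lemma convex_lip (h : banach_lattice le) (T : V -> V) (p : V) (r M : R) :
  convex_op le T -> 0 < r -> (forall c, `|c - p| <= r -> `|T c| <= M) ->
  forall x z, `|x - p| <= r / 4 -> `|z - p| <= r / 4 ->
  `|T z - T x| <= (8 * M / r) * `|z - x|.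
Proof.
move=> hc r0 hM x z hx hz.
have hv := h.1.
have M0 : 0 <= M.
  by have := hM p; rewrite subrr normr0 => /(_ (ltW r0)); apply: le_trans.
have [zx|zx] := eqVneq z x.
  by rewrite zx !subrr normr0 mulr0.
set d := z - x; set de := `|d|.
have de0 : 0 < de by rewrite normr_gt0 subr_eq0.
have dele : de <= r / 2.
  rewrite /de /d (_ : z - x = (z - p) - (x - p)); last by rewrite opprB addrA subrK.
  apply: (le_trans (ler_normB _ _)).
  by rewrite [r / 2](_ : _ = r / 4 + r / 4); [apply: lerD | field].
set k := r / (2 * de); set l := 2 * de / r.
have k0 : 0 < k by rewrite divr_gt0 // mulr_gt0.
have l0 : 0 <= l by apply: divr_ge0; [apply: mulr_ge0; [done | exact: ltW] | exact: ltW].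
have l1 : l <= 1 by rewrite ler_pdivrMr // mul1r -ler_pdivlMl // mulrC.
have lk : l * k = 1 by rewrite /l /k; field; rewrite gt_eqF // gt_eqF.
have hz' : z = x + 1 *: d by rewrite scale1r /d addrC subrK.
set w := x + k *: d; set w' := x + (- k) *: d.
have hw : `|w - p| <= r.
  rewrite /w addrAC; apply: (le_trans (ler_normD _ _)).
  rewrite normrZ gtr0_norm // /k -/de.
  have -> : r / (2 * de) * de = r / 2 by field; rewrite gt_eqF.
  apply: (le_trans (lerD hx (lexx _))); lra.
have hw' : `|w' - p| <= r.
  rewrite /w' addrAC; apply: (le_trans (ler_normD _ _)).
  rewrite normrZ normrN gtr0_norm // /k -/de.
  have -> : r / (2 * de) * de = r / 2 by field; rewrite gt_eqF.
  apply: (le_trans (lerD hx (lexx _))); lra.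
have c1 := hc w x l (introT andP (conj l0 l1)).
have e1 : l *: w + (1 - l) *: x = z.
  have -> : (1 - l) *: x = (1 - l) *: (x + 0 *: d) by rewrite scale0r addr0.
  rewrite /w comb2 subrKC lk mulr0 addr0 scale1r.
  by rewrite hz' scale1r.
rewrite e1 in c1.
have up : le (T z - T x) (l *: (T w - T x)).
  have := le_addr_ hv (- T x) c1.
  have E : l *: T w + (T x - l *: T x) - T x = l *: T w - l *: T x.
    by rewrite addrCA addrC addrK.
  by rewrite scalerBl scale1r scalerBr E.
set m := (1 + l)^-1.
have l10 : 0 < 1 + l by apply: (lt_le_trans ltr01); rewrite lerDl.
have m0 : 0 <= m by rewrite invr_ge0 ltW.
have m1 : m <= 1 by rewrite invr_le1 // ?unitf_gt0 // lerDl.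
have c2 := hc z w' m (introT andP (conj m0 m1)).
have e2 : m *: z + (1 - m) *: w' = x.
  rewrite hz' /w' comb2 subrKC scale1r.
  have -> : m * 1 + (1 - m) * - k = 0.
    have -> : m * 1 + (1 - m) * - k = m * (1 - l * k).
      by rewrite /m; field; rewrite gt_eqF.
    by rewrite lk subrr mulr0.
  by rewrite scale0r addr0.
rewrite e2 in c2.
have lo : le (l *: (T x - T w')) (T z - T x).
  have := le_scale_ hv (1 + l) (ltW l10) c2.
  rewrite scalerDr !scalerA mulfV ?gt_eqF // scale1r.
  have -> : (1 + l) * (1 - m) = l by rewrite /m; field; rewrite gt_eqF.
  move/(le_subP hv) => H; apply/(le_subP hv).
  suff <- : T z + l *: T w' - (1 + l) *: T x = T z - T x - l *: (T x - T w') by [].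
  by rewrite scalerDl scale1r scalerBr opprB opprD addrACA.
have hx' : `|x - p| <= r by apply: (le_trans hx); lra.
have b1 : `|l *: (T x - T w')| <= l * (2 * M).
  rewrite normrZ ger0_norm //; apply: (ler_wpM2l l0).
  apply: (le_trans (ler_normB _ _)); apply: le_trans (lerD (hM _ hx') (hM _ hw')) _; lra.
have b2 : `|l *: (T w - T x)| <= l * (2 * M).
  rewrite normrZ ger0_norm //; apply: (ler_wpM2l l0).
  apply: (le_trans (ler_normB _ _)); apply: le_trans (lerD (hM _ hw) (hM _ hx')) _; lra.
apply: (le_trans (sandwich_norm h _ _ _ lo up)); apply: (le_trans (lerD b1 b2)).
rewrite le_eqVlt; apply/orP; left; apply/eqP; rewrite /l -/de; field; by rewrite gt_eqF.
Qed.
End Conv.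


Section L3.
Context {R : realType} {V : completeNormedModType R} {le : V -> V -> Prop}.

Lemma bounded_lip (h : banach_lattice le) T : convex_op le T -> bounded_op T ->
  forall R0 : R, 0 < R0 -> exists L : R, 0 <= L /\ forall x z, `|x| <= R0 -> `|z| <= R0 ->
  `|T z - T x| <= L * `|z - x|.
Proof.
move=> hc hb R0 R00.
have R4 : 0 < 4 * R0 by lra.
have [M hM] := hb (4 * R0) R4.
have M0 : 0 <= M.
  by have := hM 0; rewrite normr0 => /(_ (ltW R4)); apply: le_trans.
exists (8 * M / (4 * R0)); split.
  by apply: divr_ge0; [apply: mulr_ge0 | apply: ltW].
move=> x z hx hz.
apply: (@convex_lip _ _ le h T 0 (4 * R0) M) => //.
- by move=> c; rewrite subr0; apply: hM.
- by rewrite subr0; apply: (le_trans hx); rewrite le_eqVlt; apply/orP; left; apply/eqP; field.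
- by rewrite subr0; apply: (le_trans hz); rewrite le_eqVlt; apply/orP; left; apply/eqP; field.
Qed.

Lemma llip_aff (h : banach_lattice le) T : convex_op le T -> bounded_op T ->
  forall (p : V) (a : R), `|a| <= 1 -> forall x0, exists L d, 0 < d /\
  forall t, `|t - x0| < d -> `|T (p + a *: t) - T (p + a *: x0)| <= L * `|t - x0|.
Proof.
move=> hc hb p a a1 x0.
have R00 : 0 < `|p| + `|x0| + 1 by rewrite ltr_pwDr // addr_ge0.
have [L [L0 HL]] := bounded_lip h _ hc hb _ R00.
exists L, 1; split => // t ht.
have nt : `|t| <= `|x0| + 1.
  have -> : t = x0 + (t - x0) by rewrite addrC subrK.
  by apply: (le_trans (ler_normD _ _)); rewrite lerD2l ltW.
have nb : forall y, `|y| <= `|x0| + 1 -> `|p + a *: y| <= `|p| + `|x0| + 1.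
  move=> y hy; apply: (le_trans (ler_normD _ _)); rewrite -addrA lerD2l normrZ.
  apply: le_trans hy; rewrite -[leRHS]mul1r ler_wpM2r //.
have hx0 : `|x0| <= `|x0| + 1 by lra.
apply: (le_trans (HL _ _ (nb _ hx0) (nb _ nt))).
rewrite addrAC opprD addrA subrr add0r addrC -scalerBr normrZ.
by rewrite ler_wpM2l // mulrC; apply: ler_piMr.
Qed.

Lemma llip_open (g : V -> V) (c : R) :
  (forall x0, exists L d, 0 < d /\ forall t, `|t - x0| < d -> `|g t - g x0| <= L * `|t - x0|) ->
  open [set x | c < `|g x|].
Proof.
move=> hg; rewrite openE => x0 /= Hx0.
have [L [d [d0 Hd]]] := hg x0.
rewrite /interior; apply/nbhs_ballP.
set gap := `|g x0| - c.
have gap0 : 0 < gap by rewrite subr_gt0.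
have L1 : 0 < `|L| + 1 by rewrite ltr_pwDr.
exists (Num.min d (gap / (`|L| + 1))); first by rewrite /= lt_min d0 divr_gt0.
move=> t; rewrite -ball_normE /ball_ /= lt_min distrC => /andP[h1 h2] /=.
have h3 := Hd t h1.
have h4 : L * `|t - x0| <= `|L| * (gap / (`|L| + 1)).
  apply: (le_trans (ler_norm _)); rewrite normrM normr_id.
  by apply: ler_wpM2l => //; apply: ltW.
have h5 : `|L| * (gap / (`|L| + 1)) < gap.
  by rewrite mulrA ltr_pdivrMr // mulrC ltr_pM2l // ltrDl.
have h6 : `|g x0| <= `|g t| + `|g t - g x0|.
  by have := ler_normB (g t) (g t - g x0); rewrite opprB addrC subrK.
have gE : gap = `|g x0| - c by [].
lra.
Qed.

End L3.


Section L4.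
Context {R : realType} {V : completeNormedModType R} {le : V -> V -> Prop}.

Lemma id_a (p x0 w : V) :
  (1 / 2 : R) *: (p + (x0 + 2 *: w)) + (1 - 1 / 2) *: (p - x0) = p + w.
Proof.
have h1 : (1 - 1 / 2 : R) = 1 / 2 by field.
have h2 : (1 / 2 * 2 : R) = 1 by field.
by rewrite h1 -scalerDr addrACA [X in _ + X]addrAC subrr add0r -mulr2n -(scaler_nat 2 p) -scalerDr scalerA h2 scale1r.
Qed.

Lemma id_b (p v : V) :
  (1 / 2 : R) *: (p + v) + (1 - 1 / 2) *: (p - v) = p.
Proof.
have h1 : (1 - 1 / 2 : R) = 1 / 2 by field.
have h2 : (1 / 2 * 2 : R) = 1 by field.
by rewrite h1 -scalerDr addrACA subrr addr0 -mulr2n -(scaler_nat 2 p) scalerA h2 scale1r.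
Qed.

Lemma convex_local_bound (h : banach_lattice le) T (p x0 : V) (r K Kp : R) :
  convex_op le T -> 0 < r ->
  (forall y, `|x0 - y| < r -> `|T (p + y)| <= K /\ `|T (p - y)| <= K) ->
  `|T p| <= Kp ->
  forall c, `|c - p| <= r / 4 -> `|T c| <= 2 * Kp + 2 * K.
Proof.
move=> hc r0 HK Hp c hcp.
have hv := h.1.
have l01 : 0 <= (1 / 2 : R) <= 1 by apply/andP; split; lra.
have ub : forall w, `|w| <= r / 4 -> exists U, le (T (p + w)) U /\ `|U| <= K.
  move=> w hw.
  exists ((1 / 2 : R) *: T (p + (x0 + 2 *: w)) + (1 - 1 / 2) *: T (p - x0)); split.
    by have := hc (p + (x0 + 2 *: w)) (p - x0) (1 / 2) l01; rewrite id_a.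
  have hy1 : `|x0 - (x0 + 2 *: w)| < r.
    by rewrite opprD addrA subrr add0r normrN normrZ ger0_norm //; lra.
  have hy2 : `|x0 - x0| < r by rewrite subrr normr0.
  have [k1 _] := HK _ hy1.
  have [_ k2] := HK _ hy2.
  apply: (le_trans (ler_normD _ _)); rewrite !normrZ !ger0_norm; try lra.
have hv4 : `|c - p| <= r / 4 := hcp.
have hv4' : `|- (c - p)| <= r / 4 by rewrite normrN.
have [U1 [HU1 NU1]] := ub _ hv4.
have [U2 [HU2 NU2]] := ub _ hv4'.
have ec : p + (c - p) = c by rewrite addrC subrK.
rewrite ec in HU1.
have c2 := hc (p + (c - p)) (p - (c - p)) (1 / 2) l01.
rewrite id_b ec in c2.
have lo : le (2 *: T p - U2) (T c).
  have two0 : (0 : R) <= 2 by lra.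
  have := le_scale_ hv 2 two0 c2; rewrite ?scalerDr ?scalerA.
  have -> : (2 * (1 / 2) : R) = 1 by field.
  have -> : (2 * (1 - 1 / 2) : R) = 1 by field.
  rewrite !scale1r => H1.
  have H2 := le_addr_ hv (- T (p - (c - p))) H1.
  rewrite addrK in H2.
  apply: (le_trans_ hv _ H2).
  apply/(le_subP hv).
  have -> : 2 *: T p - T (p - (c - p)) - (2 *: T p - U2) = U2 - T (p - (c - p)).
    have gen : forall a b u : V, 2 *: a - b - (2 *: a - u) = u - b.
      by move=> a b u; rewrite opprB addrC addrA subrK.
    exact: gen.
  exact: (proj1 (le_subP hv _ _) HU2).
apply: (le_trans (sandwich_norm h _ _ _ lo HU1)).
apply: le_trans (lerD (le_trans (ler_normB _ _) (lerD _ NU2)) NU1) _.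
  by rewrite normrZ ger0_norm //; apply: ler_wpM2l.
lra.
Qed.

End L4.


Lemma near_right0 (R : realType) (P : R -> Prop) :
  (\forall h \near 0^'+, P h) -> exists d : R, 0 < d /\ forall h, 0 < h -> h < d -> P h.
Proof.
move=> /nbhs_ballP[d d0 Hd]; exists d; split => // h h0 hd; apply: Hd => //.
by rewrite /ball /= sub0r normrN gtr0_norm.
Qed.

Lemma rlim_eps (R : realType) (V : normedModType R) (f : R -> V) l :
  f @ 0^'+ --> l -> forall e, 0 < e -> exists d : R, 0 < d /\
    forall h, 0 < h -> h < d -> `|f h - l| < e.
Proof.
move=> /cvgrPdistC_lt H e e0; exact: near_right0 (H e e0).
Qed.

Section L5.
Context {R : realType} {V : completeNormedModType R} {le : V -> V -> Prop}.
Variable S : R -> V -> V.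

Lemma sg_small (hS : convex_C0_semigroup le S) q : exists d : R, 0 < d /\
  forall τ, 0 <= τ <= d -> `|S τ q| <= `|q| + 1.
Proof.
case: hS => _ H0 _ Hc.
have [d [d0 Hd]] := rlim_eps _ _ _ _ (Hc q) 1 ltr01.
exists (d / 2); split; first by lra.
move=> τ /andP[t0 td].
have [->|tn0] := eqVneq τ 0; first by rewrite H0 lerDl.
have tp : 0 < τ by rewrite lt_neqAle eq_sym tn0.
have := Hd τ tp (le_lt_trans td _); move=> /(_ ltac:(lra)) H.
have := ler_normD q (S τ q - q); rewrite addrC subrK => H'.
apply: (le_trans H'); rewrite lerD2l; exact: ltW.
Qed.

Lemma sg_local (h : banach_lattice le) (hS : convex_C0_semigroup le S) p :
  exists δ r M : R, 0 < δ /\ 0 < r /\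
  forall τ, 0 <= τ <= δ -> forall c, `|c - p| <= r -> `|S τ c| <= M.
Proof.
have [dp [dp0 Hdp]] := sg_small hS p.
have Hcb : forall τ, 0 <= τ -> convex_op le (S τ) /\ bounded_op (S τ).
  by case: hS.
pose Iset (n : nat) := [set τ : R | 0 <= τ <= Num.min (n.+1%:R^-1) dp].
pose F (n : nat) := \bigcup_(τ in Iset n)
  ([set x | n%:R < `|S τ (p + 1 *: x)|] `|` [set x | n%:R < `|S τ (p + (-1) *: x)|]).
have Fo n : open (F n).
  apply: bigcup_open => τ /andP[t0 _].
  have [hc hb] := Hcb τ t0.
  apply: openU; apply: llip_open; apply: (llip_aff h) => //.
    by rewrite normr1.
  by rewrite normrN normr1.
have Fnd : ~ (forall n, dense (F n)).
  move=> Hd.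
  have := @Baire R V F (fun n => conj (Fo n) (Hd n)).
  move=> /(_ setT) [].
  - by exists 0.
  - exact: openT.
  move=> x [_ Hx].
  have [da [da0 Hda]] := sg_small hS (p + 1 *: x).
  have [db [db0 Hdb]] := sg_small hS (p + (-1) *: x).
  set d := Num.min da db.
  have d0 : 0 < d by rewrite lt_min da0 db0.
  set A := `|p + 1 *: x| + `|p + (-1) *: x| + 2.
  have A0 : 0 <= A by rewrite /A; have := normr_ge0 (p + 1 *: x); have := normr_ge0 (p + (-1) *: x); lra.
  set n := (Num.truncn (A + d^-1)).+1.
  have hn1 : A + d^-1 < n%:R by apply: truncnS_gt.
  have hn2 : n%:R <= n.+1%:R :> R by rewrite ler_nat.
  have hd1 : 0 < d^-1 by rewrite invr_gt0.
  have hn3 : n.+1%:R^-1 < d.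
    rewrite -[d]invrK ltf_pV2 ?posrE //; lra.
  have [τ /andP[t0 tle] Hτ] := Hx n Logic.I.
  have tda : τ <= da.
    apply: (le_trans tle); rewrite ge_min; apply/orP; left.
    apply: (le_trans (ltW hn3)); rewrite ge_min lexx //.
  have tdb : τ <= db.
    apply: (le_trans tle); rewrite ge_min; apply/orP; left.
    apply: (le_trans (ltW hn3)); rewrite ge_min lexx orbT //.
  have := Hda τ (introT andP (conj t0 tda)).
  have := Hdb τ (introT andP (conj t0 tdb)).
  have AE : A = `|p + 1 *: x| + `|p + (-1) *: x| + 2 by [].
  have := normr_ge0 (p + 1 *: x); have := normr_ge0 (p + (-1) *: x).
  case: Hτ => /= H; lra.
move/existsNP: Fnd => [n Hn].
have [Ob [[x0 Ox0] OF]] := denseNE Hn.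
move: (open_nbhs_nbhs Ox0) => /nbhs_ballP[r r0 Hr].
have HK : forall τ, Iset n τ -> forall y, `|x0 - y| < r ->
    `|S τ (p + y)| <= n%:R /\ `|S τ (p - y)| <= n%:R.
  move=> τ It y hy.
  have Oy : Ob y by apply: Hr; rewrite -ball_normE /ball_ /=.
  split; rewrite leNgt; apply/negP => H.
  - have : (Ob `&` F n) y.
      by split => //; exists τ => //; left; rewrite /= scale1r.
    by rewrite OF.
  - have : (Ob `&` F n) y.
      by split => //; exists τ => //; right; rewrite /= scaleN1r.
    by rewrite OF.
exists (Num.min (n.+1%:R^-1) dp), (r / 4), (2 * (`|p| + 1) + 2 * n%:R).
split; first by rewrite lt_min dp0 invr_gt0 ltr0Sn.
split; first by rewrite divr_gt0.
move=> τ It c hc.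
have t0 : 0 <= τ by case/andP: It.
have [hcv _] := Hcb τ t0.
apply: (@convex_local_bound _ _ le h (S τ) p x0 r) => //.
  by move=> y hy; apply: HK.
apply: Hdp; case/andP: It => -> /= H; apply: (le_trans H); by rewrite ge_min lexx orbT.
Qed.

End L5.


Section L6.
Context {R : realType} {V : normedModType R}.

Lemma le_eps (x y : R) : (forall e, 0 < e -> x <= y + e) -> x <= y.
Proof.
move=> H; rewrite leNgt; apply/negP => xy.
have := H ((x - y) / 2) ltac:(by rewrite divr_gt0 // subr_gt0); lra.
Qed.

Lemma const_lemma (φ : R -> V) (t : R) : 0 <= t ->
  (forall s, 0 <= s -> s < t -> forall e, 0 < e -> exists d : R, 0 < d /\
     forall h, 0 < h -> h < d -> `|φ (s + h) - φ s| <= e * h) ->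
  (forall s, 0 < s -> s <= t -> forall e, 0 < e -> exists d : R, 0 < d /\
     forall h, 0 < h -> h < d -> `|φ (s - h) - φ s| <= e) ->
  φ t = φ 0.
Proof.
move=> t0 Hr Hl.
suff H : forall e, 0 < e -> `|φ t - φ 0| <= e * t.
  apply/eqP; rewrite -subr_eq0 -normr_le0.
  apply: le_eps => e e0; rewrite add0r.
  have t1 : 0 < t + 1 by lra.
  apply: (le_trans (H (e / (t + 1)) (divr_gt0 e0 t1))).
  rewrite mulrAC ler_pdivrMr // ler_pM2l //; lra.
move=> e e0.
pose P s' := `|φ s' - φ 0| <= e * s'.
pose A := [set s | 0 <= s /\ s <= t /\ forall s', 0 <= s' -> s' <= s -> P s'].
have A0 : A 0.
  split => //; split => // s' s0 s'0.
  have -> : s' = 0 by apply/eqP; rewrite eq_le s'0 s0.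
  by rewrite /P subrr normr0 mulr0.
have ubA : ubound A t by move=> s [_ []].
have hA : has_sup A by split; [exists 0 | exists t].
set m := sup A.
have m0 : 0 <= m by apply: sup_upper_bound.
have mt : m <= t by apply: ge_sup => //; exists 0.
have Plt : forall s', 0 <= s' -> s' < m -> P s'.
  move=> s' s0 sm.
  have [a [_ [_ Ha]] sa] := sup_adherent (ltac:(by rewrite subr_gt0) : 0 < m - s') hA.
  apply: Ha => //; rewrite -/m in sa; apply: ltW; lra.
have Pm : P m.
  have [->|mn0] := eqVneq m 0; first by rewrite /P subrr normr0 mulr0.
  have mp : 0 < m by rewrite lt_neqAle eq_sym mn0.
  apply: le_eps => e' e'0.
  have [d [d0 Hd]] := Hl m mp mt e' e'0.
  set h := Num.min d m / 2.
  have hmin1 : Num.min d m <= d by rewrite ge_min lexx.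
  have hmin2 : Num.min d m <= m by rewrite ge_min lexx orbT.
  have hmin0 : 0 < Num.min d m by rewrite lt_min d0 mp.
  have hE : h = Num.min d m / 2 by [].
  have hd : h < d by lra.
  have hm : h < m by lra.
  have h0 : 0 < h by lra.
  have H1 := Hd h h0 hd.
  have H2 : P (m - h) by apply: Plt; lra.
  rewrite /P in H2 *.
  have := ler_normD (φ (m - h) - φ 0) (φ m - φ (m - h)).
  rewrite addrC addrA subrK => H3.
  rewrite distrC in H1.
  have : e * (m - h) <= e * m by rewrite ler_pM2l //; lra.
  lra.
have PA : A m.
  split => //; split => // s' s0 sm.
  have [->|sne] := eqVneq s' m => //.
  by apply: Plt => //; rewrite lt_neqAle sne.
have mt' : m = t.
  apply/eqP; rewrite eq_le mt /=; rewrite leNgt; apply/negP => mlt.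
  have [d [d0 Hd]] := Hr m m0 mlt e e0.
  set h := Num.min d (t - m) / 2.
  have hmin1 : Num.min d (t - m) <= d by rewrite ge_min lexx.
  have hmin2 : Num.min d (t - m) <= t - m by rewrite ge_min lexx orbT.
  have hmin0 : 0 < Num.min d (t - m) by rewrite lt_min d0 subr_gt0.
  have hE : h = Num.min d (t - m) / 2 by [].
  have h0 : 0 < h by lra.
  have : A (m + h).
    split; first by lra.
    split; first by lra.
    move=> s' s0 s'le.
    have [sm|sm] := leP s' m; first by case: PA => _ [_]; apply.
    have H1 := Hd (s' - m) ltac:(lra) ltac:(lra).
    have em : m + (s' - m) = s' by rewrite addrC subrK.
    rewrite em in H1.
    rewrite /P.
    have := ler_normD (φ s' - φ m) (φ m - φ 0).
    rewrite -addrA addKr => H3.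
    have : `|φ m - φ 0| <= e * m by [].
    have : e * (s' - m) + e * m = e * s' by ring.
    lra.
  move/(sup_upper_bound hA) => /=; rewrite -/m; lra.
by rewrite -mt'; case: PA => _ [_]; apply.
Qed.

End L6.


Section L7.
Context {R : realType} {V : completeNormedModType R} {le : V -> V -> Prop}.
Variable S : R -> V -> V.

Lemma sg_local_lip (h : banach_lattice le) (hS : convex_C0_semigroup le S) p :
  exists δ r L M : R, [/\ 0 < δ, 0 < r, 0 <= L &
  forall τ, 0 <= τ <= δ ->
    (forall c, `|c - p| <= r -> `|S τ c| <= M) /\
    (forall x z, `|x - p| <= r -> `|z - p| <= r -> `|S τ z - S τ x| <= L * `|z - x|)].
Proof.
have [δ [r0 [M [δ0 [r00 HM]]]]] := sg_local S h hS p.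
have Hcb : forall τ, 0 <= τ -> convex_op le (S τ) /\ bounded_op (S τ).
  by case: hS.
have M0 : 0 <= M.
  have := HM 0 (introT andP (conj (lexx _) (ltW δ0))) p.
  rewrite subrr normr0 => /(_ (ltW r00)); exact: le_trans.
exists δ, (r0 / 4), (8 * M / r0), M; split => //.
- by rewrite divr_gt0.
- by apply: divr_ge0; [apply: mulr_ge0 | apply: ltW].
move=> τ hτ; have t0 : 0 <= τ by case/andP: hτ.
split.
  move=> c hc; apply: HM => //; apply: (le_trans hc); lra.
move=> x z hx hz.
apply: (@convex_lip _ _ le h (S τ) p r0 M) => //.
- by case: (Hcb τ t0).
- by move=> c hc; apply: HM.
Qed.

Lemma sg_lip_shift (h : banach_lattice le) (hS : convex_C0_semigroup le S) p :
  exists δ r : R, [/\ 0 < δ, 0 < r &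
  forall τ0, 0 <= τ0 -> exists L : R, 0 <= L /\ forall τ, τ0 <= τ -> τ <= τ0 + δ ->
    forall x z, `|x - p| <= r -> `|z - p| <= r -> `|S τ z - S τ x| <= L * `|z - x|].
Proof.
have [δ [r [L1 [M [δ0 r0 L10 HL]]]]] := sg_local_lip h hS p.
have Hcb : forall τ, 0 <= τ -> convex_op le (S τ) /\ bounded_op (S τ).
  by case: hS.
have Hsg : forall s t x, 0 <= s -> 0 <= t -> S (t + s) x = S t (S s x).
  by case: hS.
exists δ, r; split => // τ0 τ00.
have [hc hb] := Hcb τ0 τ00.
have R00 : 0 < `|M| + 1 by rewrite ltr_pwDr.
have [L2 [L20 HL2]] := bounded_lip h _ hc hb _ R00.
exists (L2 * L1); split; first by rewrite mulr_ge0.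
move=> τ t1 t2 x z hx hz.
have σ0 : 0 <= τ - τ0 by rewrite subr_ge0.
have σ1 : τ - τ0 <= δ by lra.
have [HB HLσ] := HL (τ - τ0) (introT andP (conj σ0 σ1)).
have eτ : τ = τ0 + (τ - τ0) by rewrite addrC subrK.
rewrite eτ !(Hsg _ _ _ σ0 τ00).
have bx : `|S (τ - τ0) x| <= `|M| + 1.
  by apply: (le_trans (HB x hx)); apply: (le_trans (ler_norm M)); lra.
have bz : `|S (τ - τ0) z| <= `|M| + 1.
  by apply: (le_trans (HB z hz)); apply: (le_trans (ler_norm M)); lra.
apply: (le_trans (HL2 _ _ bx bz)).
rewrite -mulrA; apply: ler_wpM2l => //.
exact: HLσ.
Qed.

End L7.


Lemma cont_left (R : realType) (V : normedModType R) (f : R -> V) s :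
  f x @[x --> s] --> f s -> forall e, 0 < e -> exists d : R, 0 < d /\
  forall h, 0 < h -> h < d -> `|f (s - h) - f s| < e.
Proof.
move=> /cvgrPdist_lt H e e0.
move: (H e e0) => /nbhs_ballP[d d0 Hd].
exists d; split => // h h0 hd.
rewrite distrC; apply: Hd.
by rewrite -ball_normE /ball_ /= opprB addrC subrK gtr0_norm.
Qed.

Lemma diffq (R : realType) (V : normedModType R) (h : R) (Y Z p : V) : h != 0 ->
  Y - Z = h *: (h^-1 *: (Y - p) - h^-1 *: (Z - p)).
Proof.
move=> hn0; rewrite scalerBr !scalerA mulfV // !scale1r.
by rewrite opprB addrA subrK.
Qed.


Theorem theorem3p5 (R : realType) (V : completeNormedModType R)
  (le : V -> V -> Prop) (S : R -> V -> V) (y : R -> V) :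
  banach_lattice le ->
  order_continuous_norm le ->
  convex_C0_semigroup le S ->
  {within `[0, +oo[, continuous y} ->
  (forall t : R, 0 <= t -> exists a : V,
      generator_at S (y t) a /\
      (fun h : R => h^-1 *: (y (t + h) - y t)) @ 0^'+ --> a) ->
  forall t : R, 0 <= t -> y t = S t (y 0).
Proof.
move=> hBL _ hS hy hgen t t0.
have H0 : forall x, S 0 x = x by case: hS.
have Hsg : forall s t x, 0 <= s -> 0 <= t -> S (t + s) x = S t (S s x) by case: hS.
have Hcb : forall τ, 0 <= τ -> convex_op le (S τ) /\ bounded_op (S τ) by case: hS.
have Hc : forall x, (fun t => S t x) @ 0^'+ --> x by case: hS.
pose φ s := S (t - s) (y s).
have E : φ t = φ 0.
  apply: (@const_lemma R V φ t t0).
  - move=> s s0 st e e0.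
    have [a [ga da]] := hgen s s0.
    set p := y s.
    have [δ [r [δ0 r0 HL]]] := sg_lip_shift S hBL hS p.
    set δ' := Num.min δ (t - s).
    have δ'0 : 0 < δ' by rewrite lt_min δ0 subr_gt0.
    have δ'1 : δ' <= δ by rewrite ge_min lexx.
    have δ'2 : δ' <= t - s by rewrite ge_min lexx orbT.
    have τ00 : 0 <= t - s - δ' by lra.
    have [L [L0 HLL]] := HL _ τ00.
    have L1 : 0 < L + 1 by lra.
    set ε := Num.min 1 (e / (2 * (L + 1))).
    have ε0 : 0 < ε by rewrite lt_min ltr01 divr_gt0 // mulr_gt0.
    have ε1 : ε <= 1 by rewrite ge_min lexx.
    have ε2 : ε <= e / (2 * (L + 1)) by rewrite ge_min lexx orbT.
    have [d1 [d10 Hd1]] := rlim_eps _ _ _ _ da ε ε0.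
    have [d2 [d20 Hd2]] := rlim_eps _ _ _ _ ga ε ε0.
    have a1 : 0 < `|a| + 1 by rewrite ltr_pwDr.
    have ra : 0 < r / (`|a| + 1) by rewrite divr_gt0.
    exists (Num.min (Num.min d1 d2) (Num.min δ' (r / (`|a| + 1)))); split.
      by rewrite lt_min; apply/andP; split; rewrite lt_min; apply/andP; split.
    move=> h h0; rewrite lt_min => /andP[]; rewrite lt_min => /andP[hd1 hd2].
    rewrite lt_min => /andP[hd3 hd4].
    have q1 := Hd1 h h0 hd1.
    have q2 := Hd2 h h0 hd2.
    have hn0 : h != 0 by rewrite gt_eqF.
    have nq : forall q : V, `|q - a| < ε -> `|h *: q| <= r.
      move=> q hq; rewrite normrZ gtr0_norm //.
      have : `|q| <= `|a| + 1.
        have := ler_normD a (q - a); rewrite addrC subrK; lra.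
      move=> hq1; apply: (le_trans (ler_wpM2l (ltW h0) hq1)).
      by rewrite -ler_pdivlMr // ltW.
    have nYp : `|y (s + h) - p| <= r.
      by have := nq _ q1; rewrite scalerA mulfV // scale1r.
    have nZp : `|S h p - p| <= r.
      by have := nq _ q2; rewrite scalerA mulfV // scale1r.
    have nYZ : `|y (s + h) - S h p| <= h * (2 * ε).
      rewrite (@diffq R V h (y (s + h)) (S h p) p hn0) normrZ gtr0_norm //; apply: ler_wpM2l; first exact: ltW.
      set q1' := h^-1 *: (y (s + h) - p); set q2' := h^-1 *: (S h p - p).
      have -> : q1' - q2' = (q1' - a) - (q2' - a) by rewrite opprB addrA subrK.
      by apply: (le_trans (ler_normB _ _)); lra.
    have tsh : 0 <= t - s - h by lra.
    have e1 : S (t - s) p = S (t - s - h) (S h p).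
      by rewrite -Hsg ?subrK //; exact: ltW.
    rewrite /φ e1 (_ : t - (s + h) = t - s - h); last by rewrite opprD addrA.
    apply: (le_trans (HLL _ _ _ _ _ nZp nYp)); [lra | lra |].
    apply: (le_trans (ler_wpM2l L0 nYZ)).
    have : L * (2 * ε) <= e.
      apply: (@le_trans _ _ (L * (e / (L + 1)))).
        apply: ler_wpM2l => //.
        have -> : e / (L + 1) = 2 * (e / (2 * (L + 1))) by field; lra.
        lra.
      rewrite mulrA ler_pdivrMr //; nra.
    move=> HLe; rewrite mulrCA [e * h]mulrC; apply: ler_wpM2l; [exact: ltW | exact: HLe].
  - move=> s s0 st e e0.
    set p := y s.
    have [hyin _] := (continuous_within_itvcyP 0 y).1 hy.
    have cys : y x @[x --> s] --> y s.
      by apply: hyin; rewrite in_itv /= andbT.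
    have ts0 : 0 <= t - s by lra.
    have [hc hb] := Hcb _ ts0.
    have R00 : 0 < `|p| + 1 by rewrite ltr_pwDr.
    have [L2 [L20 HL2]] := bounded_lip hBL _ hc hb _ R00.
    have [δ [r [L1 [M [δ0 r0 L10 HL]]]]] := sg_local_lip S hBL hS p.
    have L21 : 0 < L2 + 1 by lra.
    have L11 : 0 < L1 + 1 by lra.
    set η := Num.min 1 (e / (L2 + 1)).
    have η0 : 0 < η by rewrite lt_min ltr01 divr_gt0.
    have η1 : η <= 1 by rewrite ge_min lexx.
    have η2 : η <= e / (L2 + 1) by rewrite ge_min lexx orbT.
    set εy := Num.min r (η / (2 * (L1 + 1))).
    have εy0 : 0 < εy by rewrite lt_min r0 divr_gt0 // mulr_gt0.
    have εy1 : εy <= r by rewrite ge_min lexx.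
    have εy2 : εy <= η / (2 * (L1 + 1)) by rewrite ge_min lexx orbT.
    have [d1 [d10 Hd1]] := cont_left _ _ _ _ cys _ εy0.
    have η20 : 0 < η / 2 by rewrite divr_gt0.
    have [d2 [d20 Hd2]] := rlim_eps _ _ _ _ (Hc p) _ η20.
    exists (Num.min (Num.min d1 d2) (Num.min δ s)); split.
      by rewrite lt_min; apply/andP; split; rewrite lt_min; apply/andP; split.
    move=> h h0; rewrite lt_min => /andP[]; rewrite lt_min => /andP[hd1 hd2].
    rewrite lt_min => /andP[hd3 hd4].
    have u1 := Hd1 h h0 hd1.
    have u2 := Hd2 h h0 hd2.
    have hδ : 0 <= h <= δ by apply/andP; split; apply: ltW.
    have [_ HLh] := HL h hδ.
    have pp : `|p - p| <= r by rewrite subrr normr0 ltW.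
    have up : `|y (s - h) - p| <= r by apply: ltW; apply: lt_le_trans u1 εy1.
    have W1 := HLh p (y (s - h)) pp up.
    have Wp : `|S h (y (s - h)) - p| <= η.
      have := ler_normD (S h (y (s - h)) - S h p) (S h p - p).
      rewrite addrA subrK => H1.
      apply: (le_trans H1).
      have : L1 * `|y (s - h) - p| <= L1 * (η / (2 * (L1 + 1))).
        by apply: ler_wpM2l => //; apply: ltW; apply: lt_le_trans u1 εy2.
      have : L1 * (η / (2 * (L1 + 1))) <= η / 2.
        rewrite mulrA ler_pdivrMr; last by rewrite mulr_gt0.
        have -> : η / 2 * (2 * (L1 + 1)) = η * (L1 + 1) by field.
        nra.
      rewrite /p in W1 u2 *; lra.
    have e1 : S (t - (s - h)) (y (s - h)) = S (t - s) (S h (y (s - h))).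
      by rewrite -Hsg //; [congr S; ring | exact: ltW].
    rewrite /φ e1 -/p.
    have nW : `|S h (y (s - h))| <= `|p| + 1.
      have := ler_normD p (S h (y (s - h)) - p); rewrite addrC subrK; lra.
    have np : `|p| <= `|p| + 1 by lra.
    apply: (le_trans (HL2 _ _ np nW)).
    apply: (le_trans (ler_wpM2l L20 Wp)).
    apply: (@le_trans _ _ (L2 * (e / (L2 + 1)))); first by apply: ler_wpM2l.
    rewrite mulrA ler_pdivrMr //; nra.
by move: E; rewrite /φ subrr H0 subr0.
Qed.
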